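(* Let $q\ge 3$ be a prime power and $n=q^4-1$. For every integer $a$ with $2\le a\le q^2-1$ there exists a QUENTA code with parameters $[[n,\,n-4(a-1)-3,\,d\ge a+1;\,1]]_q$.
   Context: A QUENTA code (entanglement-assisted quantum error-correcting code) with parameters $[[n,k,d;c]]_q$ is a $q$-ary entanglement-assisted quantum stabilizer code that encodes $k$ logical qudits into $n$ physical qudits using $c$ pairs of maximally entangled qudits pre-shared between sender and receiver, and has minimum distance $d$. *)

(* Defs.v *)
From HB Require Import structures.
From mathcomp Require Import all_boot all_order all_algebra all_field.
Set Implicit Arguments. Unset Strict Implicit. Unset Printing Implicit Defensive.
Import GRing.Theory.
Local Open Scope ring_scope.

(* A Pauli operator on n qudits (modulo phases) is a vector (a|b) in F_q^(2n),
   represented as a row vector of length n + n. *)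
Notation pvec F n := 'rV[F]_(n + n).

Definition symp (F : finFieldType) (n : nat) (u v : pvec F n) : F :=
  (lsubmx u *m (rsubmx v)^T - rsubmx u *m (lsubmx v)^T) 0 0.

Definition swt (F : finFieldType) (n : nat) (u : pvec F n) : nat :=
  #|[set i : 'I_n | (lsubmx u 0 i != 0) || (rsubmx u 0 i != 0)]|.

Definition is_subspace (F : finFieldType) (n : nat) (S : {set pvec F n}) : Prop :=
  [/\ (0 : pvec F n) \in S,
      forall u v, u \in S -> v \in S -> u + v \in S
    & forall (x : F) u, u \in S -> x *: u \in S].

(* symplectic dual S^{perp_s}  (= centralizer Z(S) of the stabilizer) *)
Definition sdual (F : finFieldType) (n : nat) (S : {set pvec F n}) : {set pvec F n} :=
  [set v | [forall u in S, symp u v == 0]].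

(* A QUENTA code [[n,k,d;c]]_q with minimum distance at least d, given by its
   (generally non-abelian) stabilizer S, with q = #|F|:
   - dim S = n + c - k  (the extended stabilizer on n + c qudits is isotropic
     of the same dimension, encoding (n + c) - dim S logical qudits);
   - 2c = dim S - dim (S :&: S^perp) (c symplectic pairs = c ebits);
   - every element of Z(S) \ S_I = S^perp \ S has symplectic weight >= d. *)
Definition quenta_code (F : finFieldType) (n k d c : nat) : Prop :=
  exists S : {set pvec F n},
    [/\ is_subspace S,
        (#|S| * #|F| ^ k = #|F| ^ (n + c))%N,
        (#|S| = #|S :&: sdual S| * #|F| ^ (2 * c))%N
      & forall v, v \in sdual S :\: S -> (d <= swt v)%N].

(* Main.v *)
From HB Require Import structures.
From mathcomp Require Import all_boot all_order all_algebra all_field.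
From mathcomp Require Import zify ring.
Require Import Defs.
Set Implicit Arguments. Unset Strict Implicit. Unset Printing Implicit Defensive.
Import GRing.Theory.
Local Open Scope ring_scope.

Local Open Scope nat_scope.
Lemma nz_mod q x k s t : (0 < s < q ^ 4 - 1)%N ->
  (x * q ^ k + t = s + t * q ^ 4)%N -> ~~ (q ^ 4 - 1 %| x)%N.
Proof.
move=> /andP[s0 sM] e; apply/negP => dv.
have q4 : (0 < q ^ 4)%N by move: sM; lia.
have e2 : (s + t * (q ^ 4 - 1) = x * q ^ k)%N.
  rewrite mulnBr muln1 addnBA ?leq_pmulr //.
  by rewrite -e addnK.
have : (q ^ 4 - 1 %| s + t * (q ^ 4 - 1))%N by rewrite e2 dvdn_mulr.
rewrite dvdn_addl ?dvdn_mull // => /(dvdn_leq s0).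
by rewrite leqNgt sM.
Qed.

Definition isE q a x := x = (q ^ 2 + 1)%N \/ exists j, (0 < j < a)%N /\ (x = j \/ x = (j * q ^ 2)%N).

Lemma expo q a A B : (3 <= q)%N -> (a <= q ^ 2 - 1)%N ->
  (A = 0%N \/ isE q a A) -> (B = 0%N \/ isE q a B) -> ~ (A = 0%N /\ B = 0%N) ->
  ~~ (q ^ 4 - 1 %| A + B * q)%N.
Proof.
move=> q3 ha hA hB nAB.
have q4 : (q ^ 4 = q ^ 2 * q ^ 2)%N by rewrite -expnD.
have q3e : (q ^ 3 = q ^ 2 * q)%N by rewrite -expnSr.
have q5 : (q ^ 4 * q = q ^ 2 * q ^ 2 * q)%N by rewrite q4.
have [Q eQ] : {Q | q ^ 2 = Q}%N by exists (q ^ 2)%N.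
rewrite /isE in hA hB; rewrite eQ in ha q4 q3e q5 hA hB *.
have hQ : (3 * q <= Q)%N by rewrite -eQ expnS expn1 leq_mul2r q3 orbT.
have Q9 : (9 <= Q)%N by move: hQ q3; lia.
rewrite q4.
have key : forall k s t x, (0 < s < Q * Q - 1)%N -> (x * q ^ k + t = s + t * (Q * Q))%N ->
   ~~ (Q * Q - 1 %| x)%N.
  by move=> k s t x hs he; rewrite -q4; apply: (@nz_mod q x k s t); rewrite ?q4.
have QQ : (3 * q * Q <= Q * Q)%N by rewrite leq_mul2r hQ orbT.
move: hA hB nAB => [->|[->|[j [hj [->|->]]]]] [->|[->|[i [hi [->|->]]]]] nAB.
all: try by (exfalso; apply: nAB).
- apply: (@key 0 ((Q + 1) * q) 0); rewrite ?expn0; nia.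
- apply: (@key 0 (i * q) 0); rewrite ?expn0; nia.
- apply: (@key 1 i i); rewrite ?expn1; nia.
- apply: (@key 0 (Q + 1) 0); rewrite ?expn0; nia.
- apply: (@key 0 (Q + 1 + (Q + 1) * q) 0); rewrite ?expn0; nia.
- apply: (@key 0 (Q + 1 + i * q) 0); rewrite ?expn0; nia.
- apply: (@key 1 (Q * q + q + i) i); rewrite ?expn1; nia.
- apply: (@key 0 j 0); rewrite ?expn0; nia.
- apply: (@key 0 (j + (Q + 1) * q) 0); rewrite ?expn0; nia.
- apply: (@key 0 (j + i * q) 0); rewrite ?expn0; nia.
- apply: (@key 1 (j * q + i) i); rewrite ?expn1; nia.
- apply: (@key 0 (j * Q) 0); rewrite ?expn0; nia.
- apply: (@key 2 (j + q + Q * q) (j + q)); rewrite -?eQ; nia.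
- apply: (@key 3 (j * q + i) (j * q + i)); nia.
- apply: (@key 2 (j + i * q) (j + i * q)); nia.
Qed.

Lemma no_jQ j Q : 8 < Q -> j.+1 * Q = Q + 1 -> False.
Proof.
rewrite mulSn => hQ h; have : j * Q = 1 by lia.
by case: j {h} => [|j]; rewrite ?mul0n // mulSn; lia.
Qed.

Lemma ext_mod Mm A m : A < Mm -> m < Mm -> (Mm %| A + (Mm - m)) = (A == m).
Proof.
move=> hA hm; case: (ltngtP A m) => h.
- apply/negbTE/negP => dv.
  have pos : 0 < A + (Mm - m) by lia.
  by have := dvdn_leq pos dv; lia.
- have -> : A + (Mm - m) = (A - m) + Mm by lia.
  rewrite dvdn_addl //; apply/negbTE/negP => dv.
  have pos : 0 < A - m by lia.
  by have := dvdn_leq pos dv; lia.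
- by rewrite h subnKC ?dvdnn ?eqxx // ltnW.
Qed.

Local Open Scope ring_scope.

Lemma ext4 (F : finFieldType) : {L : finFieldType & {f : {rmorphism F -> L} |
  [/\ #|L| = (#|F| ^ 4)%N, forall x y : L, (x+y)^+#|F| = x^+#|F| + y^+#|F|,
      (#|F|%:R : L) = 0 & forall x : L, x^+#|F| = x -> exists c, x = f c]}}.
Proof.
set q := #|F|; set m := (q ^ 4)%N.
have q_gt1 : (1 < q)%N by apply: finNzRing_gt1.
have m_gt1: (m > 1)%N by rewrite /m (ltn_exp2l 0 4 q_gt1).
have m_gt0 := ltnW m_gt1; have m1_gt0: (m.-1 > 0)%N by rewrite -ltnS prednK.
pose P (R : nzRingType) := ('X^m - 'X : {poly R}).
have DP R: P R = ('X^(m.-1) - 1) * ('X - 0).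
  by rewrite subr0 mulrBl mul1r -exprSr prednK.
have /FinSplittingFieldFor[/= L splitLq]: P F != 0.
  by rewrite DP monic_neq0 ?rpredM ?monicXsubC ?monicXnsubC.
have eP : map_poly (in_alg L) (P F) = P L.
  by rewrite /P rmorphB /= map_polyXn map_polyX.
rewrite eP in splitLq.
have [p pr_p pcharFp] := finPcharP F.
have pcharL: p \in [pchar L] by rewrite pchar_lalg.
have qE : q = (p ^ logn p q)%N by exact: (card_pprimeChar pcharFp).
have frobD : forall x y : L, (x+y)^+q = x^+q + y^+q.
  move=> x y; rewrite qE.
  elim: (logn _ _) => // n IHn; rewrite expnSr !exprM {}IHn.
  by rewrite -!(pFrobenius_autE pcharL) rmorphD.
have qL0 : (q%:R : L) = 0.
  have lg : (0 < logn p q)%N.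
    by rewrite lt0n; apply/negP => /eqP e; move: q_gt1; rewrite qE e.
  by rewrite qE natrX (pcharf0 pcharL) expr0n gtn_eqF.
pose Fm := FinFieldExtType L; exists Fm; exists (in_alg L).
have idf (x : L) : x ^+ q = x -> exists c, x = in_alg L c.
  move=> xFx; pose Q := map_poly (in_alg L) ('X^q - 'X).
  have: root Q x.
    rewrite /Q rmorphB /= map_polyXn map_polyX.
    by rewrite rootE !(hornerE, hornerXn) [x ^+ _]xFx subrr.
  have{Q} ->: Q = \prod_(z <- [seq b%:A | b : F]) ('X - z%:P).
    rewrite /Q finField_genPoly rmorph_prod big_image /=.
    by apply: eq_bigr => b _; rewrite rmorphB /= map_polyX map_polyC.
  by rewrite root_prod_XsubC => /mapP[a _ ->]; exists a.
split => //.
have /finField_galois_generator[/= a _ Da]: (1 <= {:L})%VS by apply: sub1v.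
pose Em := fixedSpace (a ^+ 4)%g; rewrite dimv1 expn1 in Da.
have{splitLq} [zs DqL defL] := splitLq.
have Uzs: uniq zs.
  rewrite -separable_prod_XsubC -(eqp_separable DqL) DP separable_root andbC.
  rewrite /root !hornerE subr_eq0 eq_sym expr0n gtn_eqF ?oner_eq0 //=.
  rewrite cyclotomic.separable_Xn_sub_1 // -subn1 natrB // subr_eq0.
  rewrite /m natrX qL0 expr0n /= eq_sym oner_eq0 //.
suffices /eq_card->: Fm =i zs.
  apply: succn_inj; rewrite (card_uniqP _) //= -(size_prod_XsubC _ id).
  by rewrite -(eqp_size DqL) size_polyDl size_polyXn // size_polyN size_polyX.
have in_zs: zs =i Em.
  move=> z; rewrite -root_prod_XsubC -(eqp_root DqL) (sameP fixedSpaceP eqP).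
  rewrite /root !hornerE subr_eq0 /= /m; congr (_ == z).
  elim: (4%N) => [|i IHi]; first by rewrite gal_id.
  by rewrite expgSr expnSr exprM IHi galM ?Da ?memvf.
suffices defEm: Em = {:L}%VS by move=> z; rewrite in_zs defEm memvf.
apply/eqP; rewrite eqEsubv subvf -defL -[Em]subfield_closed agenvS //.
by rewrite subv_add sub1v; apply/span_subvP=> z; rewrite in_zs.
Qed.

Section Constr.
Variables (F L : finFieldType) (f : {rmorphism F -> L}) (q : nat).
Hypotheses (hL : #|L| = (q ^ 4)%N) (hq : #|F| = q)
  (frobD : forall x y : L, (x + y) ^+ q = x ^+ q + y ^+ q)
  (qL0 : (q%:R : L) = 0)
  (idf : forall x : L, x ^+ q = x -> exists c, x = f c)
  (q3 : (3 <= q)%N).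

Definition Fr (x : L) := x ^+ q.

Lemma q_gt0 : (0 < q)%N. Proof. by apply: leq_trans q3. Qed.

Lemma Fr_zmod : zmod_morphism Fr.
Proof.
move=> x y; rewrite /Fr.
have h : (x - y) ^+ q + y ^+ q = x ^+ q by rewrite -frobD subrK.
by rewrite -h addrK.
Qed.
Lemma Fr_monoid : monoid_morphism Fr.
Proof. by rewrite /Fr; split=> [|x y]; rewrite ?exprMn ?expr1n. Qed.
HB.instance Definition _ := GRing.isZmodMorphism.Build L L Fr Fr_zmod.
HB.instance Definition _ := GRing.isMonoidMorphism.Build L L Fr Fr_monoid.

Lemma FrE x : Fr x = x ^+ q. Proof. by []. Qed.
Lemma expLQ' (x : L) : x ^+ (q ^ 4) = x.
Proof. by rewrite -hL expf_card. Qed.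

Lemma Fr_f c : Fr (f c) = f c.
Proof. by rewrite FrE -rmorphXn -hq expf_card. Qed.

Lemma Fr4 x : Fr (Fr (Fr (Fr x))) = x.
Proof.
rewrite !FrE -!exprM; set k := (_ * _)%N.
have -> : k = (q ^ 4)%N by rewrite /k; lia.
by rewrite -hL expf_card.
Qed.

Lemma expLQ (x : L) : x ^+ (q ^ 4) = x.
Proof. by rewrite -hL expf_card. Qed.

Definition M := (q ^ 4 - 1)%N.

Lemma expM1 (x : L) : x != 0 -> x ^+ M = 1.
Proof.
move=> nz; apply: (mulIf nz); rewrite mul1r -exprSr /M subn1 prednK ?expLQ //.
by rewrite expn_gt0 q_gt0.
Qed.

Lemma exp_mod (x : L) e : x != 0 -> x ^+ e = x ^+ (e %% M).
Proof.
by move=> nz; rewrite {1}(divn_eq e M) exprD mulnC exprM expM1 // expr1n mul1r.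
Qed.

Lemma exists_nonroot (P : {poly L}) : P != 0 -> (size P <= #|L|)%N ->
  exists x, ~~ root P x.
Proof.
move=> nzP sP; case: (pickP (fun x => ~~ root P x)) => [x hx | h]; first by exists x.
have hall : all (root P) (enum L).
  by apply/allP => x _; apply: negbFE; apply: h.
have := max_poly_roots nzP hall (enum_uniq L).
by rewrite -cardE ltnNge sP.
Qed.

Lemma M_gt1 : (1 < M)%N.
Proof. by rewrite /M; have := q3; nia. Qed.


Lemma exists_theta : exists th : L, Fr (Fr th) = th /\ Fr th != th.
Proof.
set e := ((q ^ 2 + 1) * (q - 1))%N.
have e_gt0 : (0 < e)%N by rewrite /e; have := q3; nia.
pose P : {poly L} := 'X * ('X^e - 1).
have sP : size P = e.+2.
  by rewrite /P mulrC size_mulX ?size_XnsubC // -size_poly_eq0 size_XnsubC.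
have nzP : P != 0 by rewrite -size_poly_eq0 sP.
have sPL : (size P <= #|L|)%N by rewrite sP hL /e; have := q3; nia.
have [y hy] := exists_nonroot nzP sPL.
move: hy; rewrite /root /P !hornerE mulf_eq0 negb_or subr_eq0 => /andP[ynz ye].
exists (y ^+ (q ^ 2 + 1)); split.
  rewrite !FrE -!exprM; set k := (_ * _)%N.
  have -> : k = (q ^ 4 + q ^ 2)%N by rewrite /k; nia.
  by rewrite exprD expLQ -exprS -addn1.
apply/negP => /eqP h.
have tnz : y ^+ (q ^ 2 + 1) != 0 by rewrite expf_neq0.
move: ye; rewrite /e exprM; apply/negP; rewrite negbK; apply/eqP.
apply: (mulIf tnz); rewrite mul1r -exprSr subn1 prednK ?q_gt0 //.
Qed.


Lemma card_nz : #|[set x : L | x != 0]| = M.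
Proof.
have -> : [set x : L | x != 0] = [set~ 0] by apply/setP => x; rewrite !inE.
by rewrite cardsC1 hL /M subn1.
Qed.

Lemma exists_alpha : exists al : 'I_M -> L, injective al /\ forall i, al i != 0.
Proof.
pose A := [set x : L | x != 0].
exists (fun i => enum_val (cast_ord (esym card_nz) i)); split.
  by move=> i j /enum_val_inj /cast_ord_inj.
by move=> i; have := enum_valP (cast_ord (esym card_nz) i); rewrite inE.
Qed.

Section Main.
Variables (th : L) (al : 'I_M -> L).
Hypotheses (th2 : Fr (Fr th) = th) (th1 : Fr th != th)
  (al_inj : injective al) (al_nz : forall i, al i != 0).

Lemma sum_al (G : L -> L) : \sum_i G (al i) = \sum_(x | x != 0) G x.
Proof.
have eA : al @: setT = [set x : L | x != 0].
  apply/eqP; rewrite eqEcard card_nz card_imset // cardsT card_ord leqnn andbT.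
  by apply/subsetP => x /imsetP[i _ ->]; rewrite inE.
have -> : \sum_i G (al i) = \sum_(i in [set: 'I_M]) G (al i).
  by apply: eq_bigl => i; rewrite inE.
rewrite -(big_imset G (in2W al_inj)) /= eA.
by apply: eq_bigl => x; rewrite inE.
Qed.

Definition psum e := \sum_i al i ^+ e.

Lemma psum_dvd e : (M %| e)%N -> psum e = -1.
Proof.
move=> /eqP dv; rewrite /psum.
rewrite (eq_bigr (fun _ => 1)); last by move=> i _; rewrite exp_mod ?dv.
rewrite sumr_const card_ord /M natrB ?expn_gt0 ?q_gt0 // natrX qL0 expr0n.
by rewrite sub0r.
Qed.

Lemma psum_ndvd e : ~~ (M %| e)%N -> psum e = 0.
Proof.
move=> ndv; set e' := (e %% M)%N.
have e'_gt0 : (0 < e')%N by rewrite lt0n.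
have e'_lt : (e' < M)%N by rewrite ltn_mod; have := M_gt1; lia.
pose P : {poly L} := 'X * ('X^e' - 1).
have sP : size P = e'.+2.
  by rewrite /P mulrC size_mulX ?size_XnsubC // -size_poly_eq0 size_XnsubC.
have nzP : P != 0 by rewrite -size_poly_eq0 sP.
have sPL : (size P <= #|L|)%N by rewrite sP hL; move: e'_lt; rewrite /M; lia.
have [g hg] := exists_nonroot nzP sPL.
move: hg; rewrite /root /P !hornerE mulf_eq0 negb_or subr_eq0 => /andP[gnz ge].
rewrite /psum (sum_al (fun x => x ^+ e)).
set S := (X in X = 0).
have : S = g ^+ e * S.
  rewrite {1}/S (reindex_inj (mulfI gnz)) /= mulr_sumr.
  apply: congr_big => // x; first by rewrite mulf_eq0 negb_or gnz.
  by move=> _; rewrite exprMn.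
move=> h; have : (1 - g ^+ e) * S = 0 by rewrite mulrBl mul1r -h subrr.
move/eqP; rewrite mulf_eq0 subr_eq0 (exp_mod _ gnz) -/e' eq_sym (negbTE ge) /=.
by move/eqP.
Qed.

Lemma psumE e : psum e = if (M %| e)%N then -1 else 0.
Proof. by case: ifP => h; [apply: psum_dvd | apply: psum_ndvd; rewrite h]. Qed.


Notation pv := (pvec F M).

Definition Zv (v : pv) (i : 'I_M) : L := f (lsubmx v 0 i) + th * f (rsubmx v 0 i).

Lemma thB_nz : Fr th - th != 0.
Proof. by rewrite subr_eq0. Qed.

Lemma symp_Z (u v : pv) : f (symp u v) * (Fr th - th) =
  \sum_i (Zv u i * Fr (Zv v i) - Fr (Zv u i) * Zv v i).
Proof.
rewrite /symp !mxE rmorphB !rmorph_sum /= mulrBl !mulr_suml -sumrB.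
apply: eq_bigr => i _; rewrite /Zv !mxE !rmorphD !rmorphM /= !Fr_f.
ring.
Qed.

Definition pre (z : L) : F := odflt 0 [pick c | f c == z].

Lemma preK z : Fr z = z -> f (pre z) = z.
Proof.
move=> /idf[c ->]; rewrite /pre; case: pickP => [d /eqP //|/(_ c)].
by rewrite eqxx.
Qed.

Lemma pre_f c : pre (f c) = c.
Proof. by apply: (fmorph_inj f); rewrite preK // Fr_f. Qed.

Definition InK (y : L) := Fr (Fr y) = y.
Definition co2 (y : L) := (Fr y - y) / (Fr th - th).
Definition co1 (y : L) := y - th * co2 y.

Lemma Fr_co2 y : InK y -> Fr (co2 y) = co2 y.
Proof.
move=> hy; rewrite /co2 fmorph_div /= !rmorphB /= hy th2.
by rewrite -[y - Fr y]opprB -[th - Fr th]opprB invrN mulrN mulNr opprK.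
Qed.

Lemma co_sum y : co1 y + th * co2 y = y.
Proof. by rewrite /co1 subrK. Qed.

Lemma Fr_co1 y : InK y -> Fr (co1 y) = co1 y.
Proof.
move=> hy; rewrite /co1 rmorphB rmorphM /= Fr_co2 //.
have e : (Fr th - th) * co2 y = Fr y - y by rewrite /co2 mulrC divfK // thB_nz.
have -> : Fr y = (Fr th - th) * co2 y + y by rewrite e subrK.
ring.
Qed.

Definition vecK (U : 'I_M -> L) : pv :=
  row_mx (\row_i pre (co1 (U i))) (\row_i pre (co2 (U i))).

Lemma Zv_vecK U i : InK (U i) -> Zv (vecK U) i = U i.
Proof.
move=> hU; rewrite /Zv /vecK row_mxKl row_mxKr !mxE !preK ?Fr_co1 ?Fr_co2 //.
exact: co_sum.
Qed.

Lemma Zv_inK v i : InK (Zv v i).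
Proof. by rewrite /InK /Zv !rmorphD !rmorphM /= !Fr_f th2. Qed.

Lemma Zv0 v i : Zv v i = 0 -> lsubmx v 0 i = 0 /\ rsubmx v 0 i = 0.
Proof.
rewrite /Zv => h.
have hr : rsubmx v 0 i = 0.
  apply/eqP/negP => /negP nz.
  have fnz : f (rsubmx v 0 i) != 0 by rewrite fmorph_eq0.
  have : th = f (- lsubmx v 0 i / rsubmx v 0 i).
    rewrite fmorph_div rmorphN /=; apply: (mulIf fnz).
    by rewrite divfK //; apply/eqP; rewrite -addr_eq0 addrC h.
  by move=> e; move: th1; rewrite e Fr_f eqxx.
split => //; move: h; rewrite hr rmorph0 mulr0 addr0 => /eqP.
by rewrite fmorph_eq0 => /eqP.
Qed.

Lemma ZvD u v i : Zv (u + v) i = Zv u i + Zv v i.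
Proof. rewrite /Zv !linearD !mxE !rmorphD /=; ring. Qed.

Lemma ZvZ c u i : Zv (c *: u) i = f c * Zv u i.
Proof. rewrite /Zv !linearZ !mxE !rmorphM /=; ring. Qed.

Lemma ZvN u i : Zv (- u) i = - Zv u i.
Proof. by rewrite -scaleN1r ZvZ rmorphN1 mulN1r. Qed.

Lemma Zv_inj u v : (forall i, Zv u i = Zv v i) -> u = v.
Proof.
move=> h; apply/eqP; rewrite -subr_eq0; apply/eqP.
set w := u - v.
have hw : forall i, Zv w i = 0 by move=> i; rewrite /w ZvD ZvN h subrr.
rewrite -[w]hsubmxK; apply/rowP => j; rewrite !mxE.
case: splitP => k _; have := Zv0 (hw k) => -[h1 h2].
  by rewrite h1.
by rewrite h2.
Qed.

Lemma vecK_Zv v : vecK (Zv v) = v.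
Proof. by apply: Zv_inj => i; rewrite Zv_vecK //; apply: Zv_inK. Qed.

Lemma vecK_ext U U' : (forall i, U i = U' i) -> vecK U = vecK U'.
Proof.
by move=> h; rewrite /vecK; congr row_mx; apply/rowP => i; rewrite !mxE h.
Qed.


Definition Fr2 (x : L) := Fr (Fr x).

Lemma Fr2E (x : L) : Fr2 x = x ^+ (q ^ 2).
Proof. by rewrite /Fr2 !FrE -exprM expnS expn1. Qed.

Definition ev (ms : seq (L * nat)) (x : L) := \sum_(p <- ms) p.1 * x ^+ p.2.
Definition frs (ms : seq (L * nat)) := [seq (Fr p.1, (p.2 * q)%N) | p <- ms].

Lemma Fr_ev ms x : Fr (ev ms x) = ev (frs ms) x.
Proof.
rewrite /ev /frs big_map rmorph_sum; apply: eq_bigr => p _ /=.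
by rewrite rmorphM /= [Fr (x ^+ _)]FrE -exprM.
Qed.

Lemma pair_sum ms ms' : \sum_i ev ms (al i) * ev ms' (al i) =
  \sum_(p <- ms) \sum_(p' <- ms') p.1 * p'.1 * psum (p.2 + p'.2).
Proof.
rewrite /ev /psum.
rewrite (eq_bigr (fun i => \sum_(p <- ms) \sum_(p' <- ms')
   p.1 * p'.1 * al i ^+ (p.2 + p'.2))); last first.
  move=> i _; rewrite mulr_suml; apply: eq_bigr => p _; rewrite mulr_sumr.
  by apply: eq_bigr => p' _; rewrite exprD; ring.
rewrite exchange_big /=; apply: eq_bigr => p _.
rewrite exchange_big /=; apply: eq_bigr => p' _.
by rewrite mulr_sumr.
Qed.

Variables (a : nat).
Hypotheses (ha2 : (2 <= a)%N) (haq : (a <= q ^ 2 - 1)%N).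

Lemma isE_nz x : isE q a x -> x <> 0%N.
Proof. by case=> [->|[j [hj [->|->]]]]; lia. Qed.

Lemma pair_vanish (s1 s2 : seq (L * nat)) c1 c2 :
  (forall p, p \in s1 -> isE q a p.2) -> (forall p, p \in s2 -> isE q a p.2) ->
  \sum_(p <- (c1, 0%N) :: s1) \sum_(p' <- frs ((c2, 0%N) :: s2))
     p.1 * p'.1 * psum (p.2 + p'.2) = - (c1 * Fr c2).
Proof.
move=> h1 h2; rewrite /frs /= big_cons big_cons /= psum_dvd ?dvdn0 //.
have ex : forall A B, (A = 0%N \/ isE q a A) -> (B = 0%N \/ isE q a B) ->
    ~ (A = 0%N /\ B = 0%N) -> psum (A + B * q) = 0.
  move=> A B hA hB nAB; apply: psum_ndvd; rewrite /M.
  exact: (expo q3 haq hA hB nAB).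
rewrite (@big1_seq _ _ _ _ [seq _ | p <- s2]); last first.
  move=> p' /andP[_ /mapP[p hp ->]] /=.
  rewrite (ex 0%N p.2) ?mulr0 //; first by left.
    by right; apply: h2.
  by case=> _; apply: isE_nz; apply: h2.
rewrite big1_seq ?addr0; first by rewrite mulrN1.
move=> p /andP[_ hp]; rewrite big_cons big1_seq ?addr0.
  rewrite /= -(mul0n q) (ex p.2 0%N) ?mulr0 //; first by right; apply: h1.
    by left.
  by case=> e _; move: e; apply: isE_nz; apply: h1.
move=> p' /andP[_ /mapP[p0 hp0 ->]] /=.
rewrite (ex p.2 p0.2) ?mulr0 //; first by right; apply: h1.
  by right; apply: h2.
by case=> e _; move: e; apply: isE_nz; apply: h1.
Qed.


Notation Vp := ((F * F) * ((F * F) * {ffun 'I_(a - 1) -> L}))%type.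
Definition kf (b : F * F) : L := f b.1 + th * f b.2.
Definition eE := (q ^ 2 + 1)%N.
Definition Uw (w : Vp) (x : L) : L := kf w.1 + kf w.2.1 * x ^+ eE +
  \sum_(j < a - 1) (w.2.2 j * x ^+ j.+1 + Fr2 (w.2.2 j * x ^+ j.+1)).
Definition mst (w : Vp) : seq (L * nat) := (kf w.2.1, eE) ::
  ([seq (w.2.2 j, j.+1) | j <- enum 'I_(a - 1)] ++
   [seq (Fr2 (w.2.2 j), (j.+1 * q ^ 2)%N) | j <- enum 'I_(a - 1)]).
Definition ms (w : Vp) := (kf w.1, 0%N) :: mst w.

Lemma Fr2_f c : Fr2 (f c) = f c.
Proof. by rewrite /Fr2 !Fr_f. Qed.

Lemma Fr2_kf b : Fr2 (kf b) = kf b.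
Proof. by rewrite /Fr2 /kf !rmorphD !rmorphM /= !Fr_f th2. Qed.

Lemma Fr2_Fr2 x : Fr2 (Fr2 x) = x.
Proof. exact: Fr4. Qed.

Lemma Fr2D x y : Fr2 (x + y) = Fr2 x + Fr2 y.
Proof. by rewrite /Fr2 !rmorphD. Qed.
Lemma Fr2M x y : Fr2 (x * y) = Fr2 x * Fr2 y.
Proof. by rewrite /Fr2 !rmorphM. Qed.
Lemma Fr2_sum I (r : seq I) (P : pred I) (G : I -> L) :
  Fr2 (\sum_(i <- r | P i) G i) = \sum_(i <- r | P i) Fr2 (G i).
Proof. by rewrite /Fr2 !rmorph_sum. Qed.

Lemma Uw_ev w x : Uw w x = ev (ms w) x.
Proof.
rewrite /ev /ms /mst big_cons big_cons big_cat !big_map /= expr0 mulr1.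
rewrite /Uw -big_split /= addrA; congr (_ + _); apply: eq_bigr => j _.
by rewrite Fr2M [Fr2 (x ^+ _)]Fr2E -exprM.
Qed.

Lemma mst_isE w p : p \in mst w -> isE q a p.2.
Proof.
rewrite /mst inE mem_cat => /orP[/eqP -> | /orP[] /mapP[j _ ->]] /=.
- by left.
- right; exists j.+1; split; last by left.
  by have := ltn_ord j; lia.
- right; exists j.+1; split; last by right.
  by have := ltn_ord j; lia.
Qed.

Lemma InK_Uw w x : InK (Uw w x).
Proof.
rewrite /InK -/(Fr2 _) /Uw !Fr2D Fr2_sum.
congr (_ + _ + _).
  by rewrite Fr2M !Fr2_f /Fr2 th2.
  rewrite Fr2M Fr2_kf; congr (_ * _); rewrite Fr2E -exprM /eE.
  have -> : ((q ^ 2 + 1) * q ^ 2 = q ^ 4 + q ^ 2)%N by rewrite mulnDl mul1n -expnD.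
  by rewrite exprD expLQ -exprS addn1.
by apply: eq_bigr => j _; rewrite Fr2D Fr2_Fr2 addrC.
Qed.

Definition Uf (w : Vp) (i : 'I_M) := Uw w (al i).
Definition uS (w : Vp) : pv := vecK (Uf w).
Definition S : {set pv} := [set uS w | w in [set: Vp]].

Lemma Zv_uS w i : Zv (uS w) i = Uf w i.
Proof. by rewrite /uS Zv_vecK //; apply: InK_Uw. Qed.

Lemma sum_pair_ms w w' :
  \sum_i Uf w i * Fr (Uf w' i) = - (kf w.1 * Fr (kf w'.1)).
Proof.
rewrite (eq_bigr (fun i => ev (ms w) (al i) * ev (frs (ms w')) (al i))); last first.
  by move=> i _; rewrite /Uf !Uw_ev Fr_ev.
by rewrite pair_sum pair_vanish //; apply: mst_isE.
Qed.

Lemma symp_S w w' : symp (uS w) (uS w') = w.1.2 * w'.1.1 - w.1.1 * w'.1.2.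
Proof.
apply: (fmorph_inj f); apply: (mulIf thB_nz); rewrite symp_Z.
rewrite (eq_bigr (fun i => Uf w i * Fr (Uf w' i) - Uf w' i * Fr (Uf w i))); last first.
  by move=> i _; rewrite !Zv_uS (mulrC (Fr _)).
rewrite sumrB !sum_pair_ms /kf !rmorphD !rmorphM /= !Fr_f.
ring.
Qed.


Lemma Q9 : (9 <= q ^ 2)%N.
Proof. by have := q3; rewrite expnS expn1; nia. Qed.

Lemma isE_lt x : isE q a x -> (x < M)%N.
Proof.
rewrite /M; have q2 : (q ^ 4 = q ^ 2 * q ^ 2)%N by rewrite -expnD.
have [Q eQ] : {Q | q ^ 2 = Q}%N by exists (q ^ 2)%N.
have haq' := haq; rewrite q2 eQ; rewrite eQ in haq'.
have Q9 : (9 <= Q)%N by rewrite -eQ; have := q3; nia.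
by case=> [->|[j [hj [->|->]]]]; nia.
Qed.

Lemma ms_lt w p : p \in ms w -> (p.2 < M)%N.
Proof.
rewrite inE => /orP[/eqP -> /= | /mst_isE]; last by apply: isE_lt.
by have := M_gt1; lia.
Qed.

Lemma extract w m : (m < M)%N ->
  \sum_i Uf w i * al i ^+ (M - m) = - \sum_(p <- ms w | p.2 == m) p.1.
Proof.
move=> hm.
rewrite (eq_bigr (fun i => \sum_(p <- ms w) p.1 * al i ^+ (p.2 + (M - m)))); last first.
  by move=> i _; rewrite /Uf Uw_ev /ev mulr_suml; apply: eq_bigr => p _; rewrite exprD mulrA.
rewrite exchange_big /= (big_mkcond (fun p => p.2 == m)) -sumrN /= !big_seq.
apply: eq_bigr => p hp; rewrite -mulr_sumr -/(psum _) psumE.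
rewrite ext_mod ?(ms_lt hp) //.
by case: ifP => _; rewrite ?mulrN1 ?mulr0 ?oppr0.
Qed.

Lemma ms_filter0 w : \sum_(p <- ms w | p.2 == 0%N) p.1 = kf w.1.
Proof.
rewrite big_cons /= big1_seq ?addr0 // => p /andP[/eqP e hp].
by move: (mst_isE hp); rewrite e => /isE_nz.
Qed.

Lemma ms_filterE w : \sum_(p <- ms w | p.2 == eE) p.1 = kf w.2.1.
Proof.
rewrite big_cons big_cons /= eqxx.
have -> : (0 == eE)%N = false by rewrite /eE addn1.
rewrite ?add0r big_cat !big_map /= !big1_seq ?addr0 //.
- move=> j /andP[/eqP e _]; exfalso; have := ltn_ord j; move: haq e; rewrite /eE.
  have := Q9; move: (q ^ 2)%N => Q Q8 _ e _; exact: (no_jQ Q8 e).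
- move=> j /andP[/eqP e _]; exfalso; have := ltn_ord j; move: haq e; rewrite /eE.
  have := Q9; move: (q ^ 2)%N => Q; lia.
Qed.

Lemma ms_filterj w (j0 : 'I_(a - 1)) : \sum_(p <- ms w | p.2 == j0.+1) p.1 = w.2.2 j0.
Proof.
rewrite big_cons /= big_cons /= big_cat !big_map /=.
have -> : (eE == j0.+1) = false.
  apply/negbTE; rewrite /eE; have := ltn_ord j0; move: haq; have := Q9; move: (q ^ 2)%N => Q; lia.
rewrite ?add0r [X in _ + X]big1_seq ?addr0; last first.
  move=> j /andP[/eqP e _]; exfalso; have := ltn_ord j0; move: haq e; have := Q9; move: (q ^ 2)%N => Q; nia.
rewrite (big_pred1 j0) // => j /=; exact: eqSS.
Qed.

Lemma kf0 (x y : F) : f x + th * f y = 0 -> x = 0 /\ y = 0.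
Proof.
move=> h.
have hr : y = 0.
  apply/eqP/negP => /negP nz.
  have fnz : f y != 0 by rewrite fmorph_eq0.
  have : th = f (- x / y).
    rewrite fmorph_div rmorphN /=; apply: (mulIf fnz).
    by rewrite divfK //; apply/eqP; rewrite -addr_eq0 addrC h.
  by move=> e; move: th1; rewrite e Fr_f eqxx.
split => //; move: h; rewrite hr rmorph0 mulr0 addr0 => /eqP.
by rewrite fmorph_eq0 => /eqP.
Qed.

Lemma kf_inj b b' : kf b = kf b' -> b = b'.
Proof.
case: b b' => [x y] [x' y'] /= /eqP; rewrite /kf /= -subr_eq0 => /eqP h.
have := @kf0 (x - x') (y - y'); rewrite !rmorphB /= -h => /(_ _)[]; first ring.
by move/eqP; rewrite subr_eq0 => /eqP -> /eqP; rewrite subr_eq0 => /eqP ->.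
Qed.

Lemma Uf_inj w w' : (forall i, Uf w i = Uf w' i) -> w = w'.
Proof.
move=> h.
have hx : forall m, (m < M)%N -> \sum_(p <- ms w | p.2 == m) p.1 = \sum_(p <- ms w' | p.2 == m) p.1.
  move=> m hm; apply: oppr_inj; rewrite -!extract //.
  by apply: eq_bigr => i _; rewrite h.
have h1 := hx 0%N (ltnW M_gt1); rewrite !ms_filter0 in h1.
have h2 : kf w.2.1 = kf w'.2.1.
  by rewrite -!ms_filterE; apply: hx; apply: isE_lt; left.
have h3 : forall j, w.2.2 j = w'.2.2 j.
  move=> j; rewrite -!ms_filterj; apply: hx; apply: isE_lt; right.
  by exists j.+1; split; [have := ltn_ord j; lia | left].
case: w w' h1 h2 h3 {h hx} => [b [d c]] [b' [d' c']] /= /kf_inj -> /kf_inj -> h3.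
by congr (_, (_, _)); apply/ffunP.
Qed.

Lemma uS_inj : injective uS.
Proof.
move=> w w' e; apply: Uf_inj => i; by rewrite -!Zv_uS e.
Qed.

Lemma card_S : #|S| = #|{: Vp}|.
Proof. by rewrite card_imset ?cardsT //; apply: uS_inj. Qed.

Lemma memS v : v \in S <-> exists w, forall i, Zv v i = Uf w i.
Proof.
split.
  by case/imsetP => w _ ->; exists w => i; rewrite Zv_uS.
case=> w h; rewrite -(vecK_Zv v) (vecK_ext h).
exact: imset_f.
Qed.


Definition addw (w w' : Vp) : Vp :=
  ((w.1.1 + w'.1.1, w.1.2 + w'.1.2), ((w.2.1.1 + w'.2.1.1, w.2.1.2 + w'.2.1.2),
    [ffun j => w.2.2 j + w'.2.2 j])).
Definition sclw (c : F) (w : Vp) : Vp :=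
  ((c * w.1.1, c * w.1.2), ((c * w.2.1.1, c * w.2.1.2), [ffun j => f c * w.2.2 j])).

Lemma Uw_add w w' x : Uw (addw w w') x = Uw w x + Uw w' x.
Proof.
rewrite /Uw /kf /= !rmorphD.
rewrite (eq_bigr (fun j => (w.2.2 j * x ^+ j.+1 + Fr2 (w.2.2 j * x ^+ j.+1)) +
   (w'.2.2 j * x ^+ j.+1 + Fr2 (w'.2.2 j * x ^+ j.+1)))); last first.
  by move=> j _; rewrite ffunE mulrDl Fr2D; ring.
rewrite big_split /=; ring.
Qed.

Lemma Uw_scl c w x : Uw (sclw c w) x = f c * Uw w x.
Proof.
rewrite /Uw /kf /= !rmorphM.
rewrite (eq_bigr (fun j => f c * (w.2.2 j * x ^+ j.+1 + Fr2 (w.2.2 j * x ^+ j.+1))));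
  last first.
  by move=> j _; rewrite ffunE -mulrA Fr2M Fr2_f mulrDr mulrA.
rewrite -mulr_sumr; ring.
Qed.

Lemma S_scl c u : u \in S -> c *: u \in S.
Proof.
case/memS => w h; apply/memS; exists (sclw c w) => i.
by rewrite ZvZ h /Uf Uw_scl.
Qed.

Lemma S_add u v : u \in S -> v \in S -> u + v \in S.
Proof.
case/memS => w h; case/memS => w' h'; apply/memS; exists (addw w w') => i.
by rewrite ZvD h h' /Uf Uw_add.
Qed.

Definition w0 : Vp := ((0, 0), ((0, 0), [ffun => 0])).

Lemma S0 : (0 : pv) \in S.
Proof.
have h : uS w0 \in S by apply: imset_f.
by have := S_scl 0 h; rewrite scale0r.
Qed.

Lemma S_subspace : is_subspace S.
Proof.
split; [exact: S0 | exact: S_add | exact: S_scl].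
Qed.

Definition w10 : Vp := ((1, 0), ((0, 0), [ffun => 0])).
Definition w01 : Vp := ((0, 1), ((0, 0), [ffun => 0])).

Lemma in_sdual v : v \in sdual S -> forall w, symp (uS w) v = 0.
Proof.
rewrite inE => /forall_inP h w; apply/eqP; apply: h; exact: imset_f.
Qed.

Notation V2 := ((F * F) * {ffun 'I_(a - 1) -> L})%type.

Lemma hull_eq : S :&: sdual S = [set uS ((0, 0), w2) | w2 in [set: V2]].
Proof.
apply/setP => v; apply/idP/idP.
  rewrite inE => /andP[/imsetP[w _ ->] hd].
  have h1 := in_sdual hd w10; have h2 := in_sdual hd w01.
  rewrite !symp_S /= in h1 h2.
  move: h1 h2; rewrite !mul0r !mul1r sub0r subr0 => /eqP; rewrite oppr_eq0 => /eqP e2 e1.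
  case: w hd e1 e2 => [[b1 b2] w2] /= _ -> ->; exact: imset_f.
case/imsetP => w2 _ ->; rewrite inE; apply/andP; split; first exact: imset_f.
rewrite inE; apply/forall_inP => u /imsetP[w _ ->].
by rewrite symp_S /= !mulr0 subrr.
Qed.

Lemma card_hull : #|S :&: sdual S| = #|{: V2}|.
Proof.
rewrite hull_eq card_imset ?cardsT // => w2 w2' /uS_inj [].
done.
Qed.


Definition wj (j : 'I_(a - 1)) (c : L) : Vp :=
  ((0, 0), ((0, 0), [ffun k => if k == j then c else 0])).

Lemma Fr2_0 : Fr2 0 = 0.
Proof. by rewrite /Fr2 !rmorph0. Qed.

Lemma sum_w0 x : \sum_(j < a - 1) ([ffun => (0 : L)] j * x ^+ j.+1 +
   Fr2 ([ffun => (0 : L)] j * x ^+ j.+1)) = 0.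
Proof. by rewrite big1 // => j _; rewrite ffunE mul0r Fr2_0 addr0. Qed.

Lemma Uw_w10 x : Uw w10 x = 1.
Proof. rewrite /Uw /kf /= sum_w0 !rmorph0 !rmorph1; ring. Qed.

Lemma Uw_w01 x : Uw w01 x = th.
Proof. rewrite /Uw /kf /= sum_w0 !rmorph0 !rmorph1; ring. Qed.

Lemma Uw_wj j c x : Uw (wj j c) x = c * x ^+ j.+1 + Fr2 (c * x ^+ j.+1).
Proof.
rewrite /Uw /kf /= !rmorph0 (bigD1 j) //= ffunE eqxx; set s := \sum_(i < a - 1 | i != j) _; suff -> : s = 0 by ring. rewrite /s.
by rewrite big1 ?addr0 // => k /negbTE nk; rewrite ffunE nk mul0r Fr2_0 addr0.
Qed.

Definition G (y : L) := y + Fr2 y - Fr y - Fr (Fr2 y).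

Lemma G_sum (t : 'I_M -> L) : \sum_i G (t i) = G (\sum_i t i).
Proof.
rewrite /G Fr2_sum !rmorph_sum /= -big_split /= -!sumrB.
by apply: eq_bigr => i _; rewrite /Fr2.
Qed.

Lemma G_all_zero (B : L) : B != 0 -> (forall c, G (c * B) = 0) -> False.
Proof.
move=> Bnz hG.
pose P : {poly L} := 'X + 'X^(q ^ 2) - 'X^q - 'X^(q ^ 3).
have q3p : (q ^ 3 = q ^ 2 * q)%N by rewrite expnSr.
have hP y : P.[y] = G y.
  rewrite /P !hornerE /G Fr2E FrE FrE -exprM -q3p //.
have nzP : P != 0.
  apply/eqP => P0.
  have : P`_(q ^ 3) = -1.
    rewrite /P !coefB !coefD !coefXn coefX eqxx.
    have q1 : (1 < q)%N by apply: leq_trans q3.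
    have -> : (q ^ 3 == 1)%N = false by apply/negbTE/eqP; have := q3; rewrite !expnS expn0 muln1; nia.
    have -> : (q ^ 3 == q ^ 2)%N = false by apply/negbTE/eqP; have := q3; rewrite !expnS expn0 muln1; nia.
    have -> : (q ^ 3 == q)%N = false by apply/negbTE/eqP; have := q3; rewrite !expnS expn0 muln1; nia.
    by rewrite !subr0 addr0 sub0r.
  by rewrite P0 coef0 => /eqP; rewrite eq_sym oppr_eq0 oner_eq0.
have szP : (size P <= #|L|)%N.
  have hX : forall k, (k <= q ^ 3)%N -> (size ('X^k : {poly L}) <= (q ^ 3).+1)%N.
    by move=> k hk; rewrite size_polyXn ltnS.
  have q1 : (1 < q)%N by apply: leq_trans q3.
  have s1 : (size P <= (q ^ 3).+1)%N.
    rewrite /P; apply: leq_trans (size_polyD _ _) _; rewrite size_polyN geq_max.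
    rewrite hX // andbT; apply: leq_trans (size_polyD _ _) _; rewrite size_polyN geq_max.
    rewrite hX ?andbT; last by rewrite -{1}(expn1 q) leq_exp2l.
    apply: leq_trans (size_polyD _ _) _; rewrite geq_max size_polyX hX ?andbT.
      by rewrite ltnS expn_gt0 (ltnW q1).
    by rewrite leq_exp2l.
  apply: leq_trans s1 _; rewrite hL; have := q3; rewrite !expnS expn0; nia.
have [y] := exists_nonroot nzP szP.
by rewrite /root hP -(divfK Bnz y) hG eqxx.
Qed.

Lemma dist v : v \in sdual S :\: S -> (a + 1 <= swt v)%N.
Proof.
rewrite inE => /andP[vnS vd].
rewrite leqNgt addn1 ltnS; apply/negP => hsw.
have hd := in_sdual vd.
pose Z := Zv v.
have ZK i : Fr (Fr (Z i)) = Z i := Zv_inK v i.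
have hZ w : \sum_i (Uf w i * Fr (Z i) - Fr (Uf w i) * Z i) = 0.
  have e := symp_Z (uS w) v; rewrite hd rmorph0 mul0r in e.
  by rewrite [RHS]e; apply: eq_bigr => i _; rewrite Zv_uS.
have sZ : \sum_i Z i = 0.
  have e1 := hZ w10; have e2 := hZ w01.
  rewrite (eq_bigr (fun i => Fr (Z i) - Z i)) in e1; last first.
    by move=> i _; rewrite /Uf Uw_w10 rmorph1 !mul1r.
  rewrite (eq_bigr (fun i => th * Fr (Z i) - Fr th * Z i)) in e2; last first.
    by move=> i _; rewrite /Uf Uw_w01.
  rewrite sumrB -!mulr_sumr in e2; rewrite sumrB in e1.
  move/eqP: e1; rewrite subr_eq0 => /eqP e1; rewrite e1 -mulrBl in e2.
  move/eqP: e2; rewrite mulf_eq0 subr_eq0 eq_sym (negbTE th1) /=.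
  by move/eqP.
have sFZ : \sum_i Fr (Z i) = 0 by rewrite -rmorph_sum sZ rmorph0.
have hB : forall j : 'I_(a - 1), \sum_i al i ^+ j.+1 * Fr (Z i) = 0.
  move=> j; apply/eqP/negP => /negP Bnz.
  apply: (G_all_zero Bnz) => c.
  have := hZ (wj j c).
  rewrite (eq_bigr (fun i => G (c * (al i ^+ j.+1 * Fr (Z i))))).
    by rewrite G_sum -mulr_sumr.
  move=> i _; rewrite /Uf Uw_wj /G; move: (ZK i); move: (Z i) => z hz.
  rewrite /Fr2 !rmorphD !rmorphM /= !hz; ring.
have hk : forall k, (k < a)%N -> \sum_i al i ^+ k * Fr (Z i) = 0.
  case=> [|k] hk.
    by rewrite -[RHS]sFZ; apply: eq_bigr => i _; rewrite expr0 mul1r.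
  have hk' : (k < a - 1)%N by move: hk; lia.
  exact: (hB (Ordinal hk')).
pose T := [set i | Z i != 0].
have hT : (#|T| <= a)%N.
  apply: leq_trans hsw; apply: subset_leq_card; apply/subsetP => i.
  rewrite !inE; apply: contraR; rewrite negb_or !negbK => /andP[/eqP h1 /eqP h2].
  by rewrite /Z /Zv h1 h2 rmorph0 mulr0 addr0.
have T0 : T = set0.
  apply/eqP; rewrite -subset0; apply/subsetP => b hb; exfalso.
  pose h := \prod_(g <- enum (T :\ b)) ('X - (al g)%:P).
  have sh : (size h <= a)%N.
    rewrite /h size_prod_XsubC -cardE.
    by move: hT; rewrite (cardsD1 b T) hb.
  have e1 : \sum_i Fr (Z i) * h.[al i] = 0.
    rewrite (eq_bigr (fun i => \sum_(k < size h) h`_k * (al i ^+ k * Fr (Z i))));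
      last first.
      move=> i _; rewrite horner_coef mulrC mulr_suml; apply: eq_bigr => k _.
      by rewrite mulrA.
    rewrite exchange_big big1 // => k _; rewrite -mulr_sumr hk ?mulr0 //.
    exact: leq_trans (ltn_ord k) sh.
  have e2 : \sum_i Fr (Z i) * h.[al i] = Fr (Z b) * h.[al b].
    rewrite (bigD1 b) //= big1 ?addr0 // => i nib.
    case: (boolP (i \in T)) => hi.
      apply/eqP; rewrite mulf_eq0; apply/orP; right.
      rewrite /h horner_prod prodf_seq_eq0; apply/hasP; exists i.
        by rewrite mem_enum in_setD1 nib.
      by rewrite /= hornerXsubC subrr.
    by move: hi; rewrite inE negbK => /eqP ->; rewrite rmorph0 mul0r.
  have hb0 : h.[al b] != 0.
    rewrite /h horner_prod prodf_seq_neq0; apply/allP => g; rewrite mem_enum in_setD1.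
    case/andP => ngb _ /=; rewrite hornerXsubC subr_eq0.
    by apply/eqP => /al_inj e; move: ngb; rewrite e eqxx.
  move: e1; rewrite e2 => /eqP; rewrite mulf_eq0 (negbTE hb0) orbF fmorph_eq0.
  by move: hb; rewrite inE => /negbTE ->.
have v0 : v = 0.
  apply: Zv_inj => i.
  have -> : Zv 0 i = 0 by rewrite -(scale0r (0 : pv)) ZvZ rmorph0 mul0r.
  have : i \notin T by rewrite T0 inE.
  by rewrite inE negbK => /eqP.
by move: vnS; rewrite v0 S0.
Qed.

End Main.

End Constr.

Local Close Scope ring_scope.

Lemma final_arith q a : 3 <= q -> 2 <= a <= q ^ 2 - 1 ->
  q * q * (q * q * (q ^ 4) ^ (a - 1)) * q ^ (q ^ 4 - 1 - 4 * (a - 1) - 3) =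
  q ^ (q ^ 4 - 1 + 1).
Proof.
move=> q3 /andP[a2 aq].
have qq : q * q = q ^ 2 by rewrite expnS expn1.
rewrite qq -expnM -!expnD; congr (q ^ _).
have h4 : q ^ 4 = q ^ 2 * q ^ 2 by rewrite -expnD.
have Q9 : 9 <= q ^ 2 by have := q3; rewrite expnS expn1; nia.
move: aq; rewrite h4; move: (q ^ 2) Q9 => Q Q9 aq.
have : 4 * a <= Q * Q by nia.
lia.
Qed.

Theorem mainTheorem10 (F : finFieldType) (q : nat) (hq : #|F| = q) (hq3 : 3 <= q)
  (a : nat) (ha : 2 <= a <= q ^ 2 - 1) :
  quenta_code F (q ^ 4 - 1) (q ^ 4 - 1 - 4 * (a - 1) - 3) (a + 1) 1.
Proof.
have [L [fm [hL frobD qL0 idf]]] := ext4 F.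
rewrite hq in hL frobD qL0 idf.
have [th [th2 th1]] := exists_theta hL hq hq3.
have [al [al_inj al_nz]] := exists_alpha hL.
have /andP[ha2 haq] := ha.
exists (S fm th al a); split.
- exact: (S_subspace hL hq frobD idf hq3 al th2 th1 a).
- rewrite (card_S hL hq frobD qL0 idf hq3 th2 th1 al_inj al_nz ha2 haq).
  rewrite !card_prod card_ffun card_ord hq hL.
  exact: final_arith.
- rewrite (card_S hL hq frobD qL0 idf hq3 th2 th1 al_inj al_nz ha2 haq).
  rewrite (card_hull hL hq frobD qL0 idf hq3 th2 th1 al_inj al_nz ha2 haq).
  rewrite !card_prod card_ffun card_ord hq hL muln1.
  lia.
- move=> v hv; exact: (dist hL hq frobD idf hq3 th2 th1 al_inj ha2 haq hv).
Qed.
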